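(* Assume the setting of the context. Let $\delta>0$, let $\alpha$ be a finite measurable partition of $\Theta$ with $\operatorname{diam}(\alpha)<\delta$, and let $\beta$ be a partition of $\mathcal{X}$ according to central words with $\operatorname{diam}(\beta)<\delta$. Then for every Borel probability measure $\eta$ on $\Theta\times\mathcal{X}$, every $y\in\mathcal{Y}$, and every $n\ge1$, \[ \int g_n(\theta,x,y)\,d\eta(\theta,x)-KL(\eta:P_0\mid\alpha\times\beta_n)\le\log\Bigl[\int\exp(g_n(\theta,x,y))\,dP_0(\theta,x)\Bigr]+\sum_{k=0}^{n-1}\rho_\delta(T^ky). \]
   Context: Observed system: $\mathcal{Y}$ is a complete separable metric space, $T$ is Borel, and $\nu$ is a $T$-invariant ergodic probability measure. Model system: $\mathcal{X}\subset\mathcal{A}^{\mathbb{Z}}$ is a mixing shift of finite type, with left shift $(Sx)_i=x_{i+1}$ and metric $d_{\mathcal{X}}(x,y)=2^{-\inf\{|m|:x_m\ne y_m\}}$. $\Theta$ is a compact metric space with metric $d_\Theta$, and $\{\mu_\theta\}$ is the family of Gibbs measures of a regular (Hölder-norm-continuous) family of Hölder potentials $f_\theta$. Loss: $\ell:\Theta\times\mathcal{X}\times\mathcal{Y}\to\mathbb{R}$ is continuous, with $\sup_{\theta,x}|\ell(\theta,x,y)|\le\ell^*(y)$ for a $\nu$-integrable $\ell^*$. For each $\delta>0$, $\rho_\delta:\mathcal{Y}\to(0,\infty)$ is a measurable function with $|\ell(\theta,x,y)-\ell(\theta',x',y)|\le\rho_\delta(y)$ whenever $\max(d_\Theta(\theta,\theta'),d_{\mathcal{X}}(x,x'))\le\delta$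 (and $\int\rho_\delta d\nu\to0$ as $\delta\to0^+$). Set $g=-\ell$ and $g_n(\theta,x,y)=-\sum_{k=0}^{n-1}\ell(\theta,S^kx,T^ky)$. Prior: $\pi_0$ is a fully supported probability on $\Theta$, and $P_0(E)=\int\int\mathbf{1}_E\,d\mu_\theta\,d\pi_0$. Partitions: a partition of $\mathcal{X}$ according to central words is one of the form $\{[x_{-m}^m]:x\in\mathcal{X}\}$ for some $m\ge0$, where $[x_{-m}^m]=\{z:z_i=x_i,|i|\le m\}$. Also $\beta_n=\bigvee_{k<n}S^{-k}\beta$ and $\alpha\times\beta_n=\{A\times B\}$. Divergence: $KL(\eta:\gamma\mid\xi)=\sum_{C\in\xi}\eta(C)\log(\eta(C)/\gamma(C))$ if $\gamma(C)=0\Rightarrow\eta(C)=0$ on $\xi$, and $+\infty$ otherwise, with $0\log(0/x)=0$. *)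

(* Defs.v *)
From HB Require Import structures.
From mathcomp Require Import all_boot all_order all_algebra.
From mathcomp Require Import all_classical all_reals all_analysis.

Set Implicit Arguments.
Unset Strict Implicit.
Unset Printing Implicit Defensive.

Import Order.TTheory GRing.Theory Num.Theory.
Local Open Scope classical_set_scope.
Local Open Scope ring_scope.

(* Pointed metric spaces (the library metricType is not pointed, but  *)
(* a pointed carrier is needed to build the Borel measurable type).   *)
#[short(type="pmetricType")]
HB.structure Definition PMetric (K : numDomainType) :=
  { M of Pointed M & Metric K M }.

Definition Borel (R : realType) (M : pmetricType R) :=
  g_sigma_algebraType (@open M).

Definition metric_complete (R : realType) (M : pmetricType R) :=
  forall u : nat -> M,
    (forall e : R, 0 < e -> exists N : nat, forall m n : nat,
        (N <= m)%N -> (N <= n)%N -> mdist (u m) (u n) < e) ->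
    exists l : M, forall e : R, 0 < e -> exists N : nat, forall n : nat,
        (N <= n)%N -> mdist (u n) l < e.

Definition metric_separable (R : realType) (M : pmetricType R) :=
  exists D : set M, countable D /\
    forall (y : M) (e : R), 0 < e -> exists2 z, D z & mdist y z < e.

Definition SS (A : finType) (a0 : A) := int -> A.
HB.instance Definition _ (A : finType) (a0 : A) := gen_eqMixin (SS a0).
HB.instance Definition _ (A : finType) (a0 : A) := gen_choiceMixin (SS a0).
HB.instance Definition _ (A : finType) (a0 : A) :=
  isPointed.Build (SS a0) (fun _ => a0).

Definition shift (A : finType) (a0 : A) (x : SS a0) : SS a0 :=
  fun i => x (i + 1)%R.

Definition dX (R : realType) (A : finType) (a0 : A) (x y : SS a0) : R :=
  match ereal_inf [set ((absz m)%:R : R)%:E | m in [set m : int | x m <> y m]]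
  with
  | r%:E => 2 `^ (- r)
  | _ => 0
  end.
Arguments dX {R A a0}.

Definition dX_open (R : realType) (A : finType) (a0 : A) (U : set (SS a0)) :=
  forall x, U x -> exists2 r : R, 0 < r & [set y | dX x y < r] `<=` U.

Definition SSB (R : realType) (A : finType) (a0 : A) :=
  g_sigma_algebraType (@dX_open R A a0).

Definition is_SFT (A : finType) (a0 : A) (Xs : set (SS a0)) :=
  exists (N : nat) (W : {set N.-tuple A}),
    Xs = [set x | forall i : int, [tuple x (i + (nat_of_ord j)%:Z)%R | j < N] \in W].

Definition top_mixing (R : realType) (A : finType) (a0 : A) (Xs : set (SS a0)) :=
  forall U V : set (SS a0), dX_open R U -> dX_open R V ->
    (Xs `&` U) !=set0 -> (Xs `&` V) !=set0 ->
    exists N : nat, forall n : nat, (N <= n)%N ->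
      exists z, [/\ Xs z, U z & V (iter n (@shift A a0) z)].

Definition cyl (A : finType) (a0 : A) (m : nat) (x : SS a0) : set (SS a0) :=
  [set z | forall i : int, (absz i <= m)%N -> z i = x i].

Definition cyl0 (A : finType) (a0 : A) (n : nat) (x : SS a0) : set (SS a0) :=
  [set z | forall i : nat, (i < n)%N -> z i%:Z = x i%:Z].

Definition birkhoff (R : realType) (A : finType) (a0 : A) (f : SS a0 -> R)
    (n : nat) (x : SS a0) : R :=
  \sum_(k < n) f (iter k (@shift A a0) x).

Definition is_holder (R : realType) (A : finType) (a0 : A) (Xs : set (SS a0))
    (a : R) (f : SS a0 -> R) :=
  exists C : R, forall x y, Xs x -> Xs y -> `|f x - f y| <= C * dX x y `^ a.

Definition holder_norm (R : realType) (A : finType) (a0 : A) (Xs : set (SS a0))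
    (a : R) (f : SS a0 -> R) : \bar R :=
  (ereal_sup [set `|f x|%:E | x in Xs] +
   ereal_sup [set (`|f xy.1 - f xy.2| / dX xy.1 xy.2 `^ a)%:E
               | xy in [set xy : SS a0 * SS a0 | [/\ Xs xy.1, Xs xy.2 & xy.1 <> xy.2]]])%E.

Definition regular_family (R : realType) (Th : pmetricType R)
    (A : finType) (a0 : A) (Xs : set (SS a0)) (f : Th -> SS a0 -> R) :=
  exists a : R, [/\ 0 < a <= 1,
    (forall th, is_holder Xs a (f th)) &
    (forall (th : Th) (e : R), 0 < e -> exists2 r : R, 0 < r &
       forall th' : Th, mdist th th' < r ->
         (holder_norm Xs a (f th \- f th')%R < e%:E)%E)].

Definition is_Gibbs (R : realType) (A : finType) (a0 : A) (Xs : set (SS a0))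
    (f : SS a0 -> R) (mu : probability (SSB R a0) R) :=
  [/\ mu Xs = 1%E,
      (forall E : set (SSB R a0), measurable E ->
          mu (@shift A a0 @^-1` E) = mu E) &
      exists C P : R, 0 < C /\
        forall x, Xs x -> forall n : nat, (0 < n)%N ->
          C^-1 <= fine (mu (Xs `&` cyl0 n x)) / expR (- n%:R * P + birkhoff f n x)
          <= C].

Definition T_invariant (R : realType) d (Y : measurableType d)
    (nu : probability Y R) (T : Y -> Y) :=
  forall E : set Y, measurable E -> nu (T @^-1` E) = nu E.

Definition T_ergodic (R : realType) d (Y : measurableType d)
    (nu : probability Y R) (T : Y -> Y) :=
  forall E : set Y, measurable E -> T @^-1` E = E -> nu E = 0%E \/ nu E = 1%E.

Definition full_support (R : realType) (Th : pmetricType R)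
    (pi0 : probability (Borel Th) R) :=
  forall U : set Th, open U -> U !=set0 -> (0 < pi0 U)%E.

Definition loss_continuous (R : realType) (Th Y : pmetricType R)
    (A : finType) (a0 : A) (Xs : set (SS a0)) (l : Th -> SS a0 -> Y -> R) :=
  forall th x y, Xs x -> forall e : R, 0 < e -> exists2 r : R, 0 < r &
    forall th' x' y', Xs x' -> mdist th th' < r -> dX x x' < r ->
      mdist y y' < r -> `|l th x y - l th' x' y'| < e.

Definition gn (R : realType) (Th Y : pmetricType R) (A : finType) (a0 : A)
    (l : Th -> SS a0 -> Y -> R) (T : Y -> Y) (n : nat)
    (th : Th) (x : SS a0) (y : Y) : R :=
  - \sum_(k < n) l th (iter k (@shift A a0) x) (iter k T y).

Definition finite_meas_partition d (T : measurableType d) (al : set (set T)) :=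
  [/\ finite_set al,
      (forall C, al C -> measurable C),
      (forall C D, al C -> al D -> C <> D -> C `&` D = set0) &
      \bigcup_(C in al) C = setT].

Definition diam (R : realType) (T : Type) (dist : T -> T -> R) (C : set T)
    : \bar R :=
  ereal_sup [set (dist x y)%:E | x in C & y in C].

Definition part_diam (R : realType) (T : Type) (dist : T -> T -> R)
    (al : set (set T)) : \bar R :=
  ereal_sup [set diam dist C | C in al].

Definition central_partition (A : finType) (a0 : A) (Xs : set (SS a0))
    (be : set (set (SS a0))) :=
  exists m : nat, be = [set Xs `&` cyl m x | x in Xs].

Definition join_iter (A : finType) (a0 : A) (be : set (set (SS a0))) (n : nat)
    : set (set (SS a0)) :=
  [set C | C !=set0 /\ exists B : nat -> set (SS a0),
     (forall k, (k < n)%N -> be (B k)) /\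
     C = \bigcap_(k in [set k : nat | (k < n)%N]) (iter k (@shift A a0) @^-1` B k)].

Definition prod_part (T1 T2 : Type) (al : set (set T1)) (be : set (set T2))
    : set (set (T1 * T2)) :=
  [set A `*` B | A in al & B in be].

Definition klterm (R : realType) (a b : R) : R :=
  if a == 0 then 0 else a * ln (a / b).

Definition KL (R : realType) (T : Type) (eta gam : set T -> \bar R)
    (xi : set (set T)) : \bar R :=
  if `[< forall C, xi C -> gam C = 0%E -> eta C = 0%E >] then
    (\sum_(C \in xi) klterm (fine (eta C)) (fine (gam C)))%:E
  else +oo%E.

(* Main.v *)
Require Import Defs.
From HB Require Import structures.
From mathcomp Require Import all_boot all_order all_algebra.
From mathcomp Require Import all_classical all_reals all_analysis.
From mathcomp Require Import measurable_realfun.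
From mathcomp Require Import ring lra zify.
Require Import Defs.
Import Order.TTheory GRing.Theory Num.Theory.
Local Open Scope classical_set_scope.
Local Open Scope ring_scope.

Section core.
Context {d : measure_display} {T : measurableType d} {R : realType}.
Local Open Scope ereal_scope.
Import HBNNSimple.

Lemma nn_mono (mu : {measure set T -> \bar R}) (f g : T -> \bar R) :
  (forall x, 0 <= f x) -> (forall x, f x <= g x) ->
  \int[mu]_x f x <= \int[mu]_x g x.
Proof.
move=> f0 fg; have g0 x : 0 <= g x := le_trans (f0 x) (fg x).
rewrite !ge0_integralTE//; apply: ereal_sup_le => _ [h hf <-].
by exists h => //= x; exact: le_trans (hf x) (fg x).
Qed.

Lemma up_nn (mu : {measure set T -> \bar R}) (U : set T) : measurable U ->
  mu (~` U) = 0 -> forall f b : T -> \bar R,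
  (forall x, 0 <= f x) -> measurable_fun [set: T] b -> (forall x, 0 <= b x) ->
  (forall x, U x -> f x <= b x) ->
  \int[mu]_x f x <= \int[mu]_x b x.
Proof.
move=> mU hU f b f0 mb b0 fb.
rewrite [X in X <= _]ge0_integralTE//; apply: ge_ereal_sup => _ [h hf <-] /=.
rewrite -integralT_nnsfun; apply: ae_ge0_le_integral => //.
- by move=> x _; rewrite lee_fin.
- by apply/measurable_EFinP; exact: measurable_funPT.
- exists (~` U); split => //; first exact: measurableC.
  move=> x /= H Ux; apply: H => _; exact: le_trans (hf x) (fb x Ux).
Qed.


Lemma up_signed (mu : {measure set T -> \bar R}) (U : set T) : measurable U ->
  mu (~` U) = 0 -> forall (F b : T -> R),
  measurable_fun [set: T] b -> (forall x, U x -> (F x <= b x)%R) ->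
  \int[mu]_x (F x)%:E <= \int[mu]_x (b x)%:E.
Proof.
move=> mU hU F b mb Fb.
have mbE : measurable_fun [set: T] (fun x => (b x)%:E) by exact/measurable_EFinP.
have FbE : {in U, forall x, (fun x => (F x)%:E) x <= (fun x => (b x)%:E) x}.
  by move=> x /set_mem Ux; rewrite lee_fin Fb.
rewrite integralE [X in _ <= X]integralE; apply: leeB.
- apply: (@up_nn mu U mU hU ((fun x0 : T => (F x0)%:E)^\+) ((fun x0 : T => (b x0)%:E)^\+)).
  + by move=> x; exact: funepos_ge0.
  + exact: measurable_funepos.
  + by move=> x; exact: funepos_ge0.
  + by move=> x Ux; exact: (funepos_le FbE (mem_set Ux)).
- apply: (@le_trans _ _ (\int[mu]_x ((fun x0 : T => (b x0)%:E)^\- x * (\1_U x)%:E))).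
  + apply: (@up_nn mu U mU hU).
    * by move=> x; exact: funeneg_ge0.
    * apply: emeasurable_funM; first exact: measurable_funeneg.
      by apply/measurable_EFinP; exact: measurable_indic.
    * by move=> x; apply: mule_ge0; [exact: funeneg_ge0|rewrite lee_fin].
    * by move=> x Ux; rewrite indicE mem_set// mule1.
  + apply: nn_mono.
    * by move=> x; apply: mule_ge0; [exact: funeneg_ge0|rewrite lee_fin].
    * move=> x; rewrite indicE; case: (boolP (x \in U)) => [Ux|_].
        by rewrite mule1; exact: (funeneg_le FbE Ux).
      by rewrite mule0; exact: funeneg_ge0.
Qed.

Definition sfun (s : seq (set T)) (c : set T -> R) (z : T) : R :=
  (\sum_(C <- s) c C * \1_C z)%R.

Lemma sfun_cons C s c : sfun (C :: s) c = (fun z => c C * \1_C z + sfun s c z)%R.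
Proof. by apply/funext => z; rewrite /sfun big_cons. Qed.

Lemma sfun_meas s c : (forall C, C \in s -> measurable C) ->
  measurable_fun [set: T] (sfun s c).
Proof.
elim: s => [|C s IH] ms.
  have -> : sfun [::] c = cst 0%R by apply/funext => z; rewrite /sfun big_nil.
  exact: measurable_cst.
rewrite sfun_cons; apply: measurable_funD.
  apply: measurable_funM; first exact: measurable_cst.
  by apply: measurable_indic; apply: ms; rewrite mem_head.
by apply: IH => C' H; apply: ms; rewrite inE H orbT.
Qed.

Lemma sfun_int (mu : probability T R) s c : (forall C, C \in s -> measurable C) ->
  mu.-integrable [set: T] (fun z => (sfun s c z)%:E) /\
  \int[mu]_z (sfun s c z)%:E = (\sum_(C <- s) c C * fine (mu C))%:E.
Proof.
elim: s => [|C s IH] ms.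
  have -> : sfun [::] c = cst 0%R by apply/funext => z; rewrite /sfun big_nil.
  split; first exact: integrable0.
  by rewrite big_nil integral0.
have mC : measurable C by apply: ms; rewrite mem_head.
have [i2 e2] : mu.-integrable [set: T] (fun z => (sfun s c z)%:E) /\
  \int[mu]_z (sfun s c z)%:E = (\sum_(C <- s) c C * fine (mu C))%:E.
  by apply: IH => C' H; apply: ms; rewrite inE H orbT.
have i1 : mu.-integrable [set: T] (fun z => (c C * \1_C z)%:E).
  have -> : (fun z => (c C * \1_C z)%:E) = (fun z => (c C)%:E * (\1_C z)%:E).
    by apply/funext => z; rewrite EFinM.
  exact: (integrableZl measurableT (c C) (integrable_indic mu mC)).
have -> : (fun z => (sfun (C :: s) c z)%:E) =
    (fun z => (c C * \1_C z)%:E + (sfun s c z)%:E).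
  by apply/funext => z; rewrite sfun_cons EFinD.
split; first exact: integrableD.
rewrite integralD// e2 big_cons EFinD; congr (_ + _).
have -> : (fun z => (c C * \1_C z)%:E) = (fun z => (c C)%:E * (\1_C z)%:E).
  by apply/funext => z; rewrite EFinM.
rewrite (integralZl measurableT (integrable_indic mu mC)).
by rewrite integral_indic// setIT EFinM fineK ?fin_num_measure.
Qed.

Lemma sfun_in s c C z : uniq s ->
  (forall C C', C \in s -> C' \in s -> C `&` C' !=set0 -> C = C') ->
  C \in s -> C z -> sfun s c z = c C.
Proof.
move=> us ds Cs Cz; rewrite /sfun (bigD1_seq C)//= indicE mem_set// mulr1.
rewrite big_seq_cond big1 ?addr0// => C' /andP[C's neq].
rewrite indicE; case: (boolP (z \in C')) => [/set_mem C'z|_]; last by rewrite mulr0.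
by move: neq; rewrite (ds C' C C's Cs) ?eqxx//; exists z.
Qed.

Lemma sfun_out s c z : (forall C, C \in s -> ~ C z) -> sfun s c z = 0%R.
Proof.
move=> H; rewrite /sfun big_seq big1// => C Cs.
by rewrite indicE memNset ?mulr0//; exact: H.
Qed.

Lemma sum_measure (mu : {measure set T -> \bar R}) s : uniq s ->
  (forall C, C \in s -> measurable C) ->
  (forall C C', C \in s -> C' \in s -> C `&` C' !=set0 -> C = C') ->
  mu (\big[setU/set0]_(C <- s) C) = \sum_(C <- s) mu C.
Proof.
elim: s => [|C s IH] us ms ds; first by rewrite !big_nil measure0.
move: us => /= /andP[Cns us].
have mC : measurable C by apply: ms; rewrite mem_head.
have ms' : forall C', C' \in s -> measurable C' by move=> C' H; apply: ms; rewrite inE H orbT.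
have ds' : forall C1 C2, C1 \in s -> C2 \in s -> C1 `&` C2 !=set0 -> C1 = C2.
  by move=> C1 C2 H1 H2; apply: ds; rewrite inE ?H1 ?H2 orbT.
have disj : C `&` \big[setU/set0]_(C <- s) C = set0.
  apply/seteqP; split => // z [Cz]; rewrite -bigcup_seq => -[C' /= C's C'z].
  have E : C = C' by apply: ds; rewrite ?mem_head ?inE ?C's ?orbT//; exists z.
  by move: Cns; rewrite E C's.
have mU' : measurable (\big[setU/set0]_(C <- s) C).
  by rewrite big_seq; apply: bigsetU_measurable => C' H; exact: ms'.
rewrite !big_cons measureU//; congr (_ + _); exact: (IH us ms' ds').
Qed.

End core.

Section gibbs.
Context {R : realType} {X : eqType}.

Lemma gibbs_ineq (s : seq X) (p q c : X -> R) : uniq s ->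
  (forall i, i \in s -> 0 <= p i) -> (forall i, i \in s -> 0 <= q i) ->
  (forall i, i \in s -> q i = 0 -> p i = 0) -> \sum_(i <- s) p i = 1 ->
  0 < \sum_(i <- s) q i * expR (c i) /\
  \sum_(i <- s) p i * c i - \sum_(i <- s) klterm (p i) (q i) <=
  ln (\sum_(i <- s) q i * expR (c i)).
Proof.
move=> us p0 q0 qp sp.
set Z := \sum_(i <- s) q i * expR (c i).
have [i si pi0] : exists2 i, i \in s & p i != 0.
  apply/hasP; apply: contraT; rewrite -all_predC => /allP H; move: sp.
  rewrite big_seq big1; first by move/eqP; rewrite eq_sym oner_eq0.
  by move=> j js; have := H j js; rewrite /= negbK => /eqP.
have qi0 : 0 < q i.
  rewrite lt_def q0// andbT; apply/eqP => /(qp i si) /eqP; exact/negP.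
have Z0 : 0 < Z.
  rewrite /Z (bigD1_seq i)//= ltr_wpDr//; last by rewrite mulr_gt0// expR_gt0.
  by rewrite big_seq_cond sumr_ge0// => j /andP[js _]; rewrite mulr_ge0 ?q0// expR_ge0.
split; first exact: Z0.
have H : \sum_(i <- s) (p i * c i - klterm (p i) (q i) - p i * ln Z) <=
         \sum_(i <- s) (q i * expR (c i) / Z - p i).
  rewrite big_seq [X in _ <= X]big_seq; apply: ler_sum => j js.
  have [pj0|pj0] := eqVneq (p j) 0.
    rewrite /klterm pj0 eqxx !mul0r !subr0.
    by rewrite divr_ge0 ?mulr_ge0 ?q0 ?expR_ge0// ltW.
  have pjp : 0 < p j by rewrite lt_def pj0 p0.
  have qjp : 0 < q j.
    rewrite lt_def q0// andbT; apply/eqP => /(qp j js) /eqP; exact/negP.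
  rewrite /klterm (negbTE pj0).
  set w := q j * expR (c j) / (p j * Z).
  have w0 : 0 < w by rewrite divr_gt0 ?mulr_gt0 ?expR_gt0.
  have lw : ln w = ln (q j) + c j - ln (p j) - ln Z.
    rewrite /w ln_div ?posrE ?mulr_gt0 ?expR_gt0// lnM ?posrE ?expR_gt0//.
    by rewrite lnM ?posrE// expRK opprD addrA.
  have lpq : ln (p j / q j) = ln (p j) - ln (q j) by rewrite ln_div ?posrE.
  have lw1 : ln w <= w - 1.
    have := @le_ln1Dx _ (w - 1); rewrite addrCA subrr addr0; apply.
    lra.
  have E1 : p j * c j - p j * ln (p j / q j) - p j * ln Z = p j * ln w.
    by rewrite lw lpq; ring.
  have E2 : q j * expR (c j) / Z - p j = p j * (w - 1).
    rewrite /w; field; rewrite ?pj0 ?gt_eqF//.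
  by rewrite E1 E2 ler_wpM2l// ltW.
move: H; rewrite !sumrB -mulr_suml sp mul1r -mulr_suml -/Z divff ?gt_eqF// subrr.
lra.
Qed.

End gibbs.

Section core2.
Context {d : measure_display} {T : measurableType d} {R : realType}.
Local Open Scope ereal_scope.

Lemma core (eta P : probability T R) (U : set T) (s : seq (set T))
    (F : T -> R) (V : R) :
  measurable U -> eta U = 1 -> P U = 1 -> uniq s ->
  (forall C, C \in s -> measurable C) ->
  (forall C C', C \in s -> C' \in s -> C `&` C' !=set0 -> C = C') ->
  (forall z, U z -> exists2 C, C \in s & C z) ->
  (forall C z z', C \in s -> C z -> C z' -> (F z <= F z' + V)%R) ->
  (forall C, C \in s -> P C = 0 -> eta C = 0) ->
  \int[eta]_z (F z)%:E - (\sum_(C <- s) klterm (fine (eta C)) (fine (P C)))%:E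
   <= (ln (fine (\int[P]_z (expR (F z))%:E)) + V)%:E.
Proof.
move=> mU etaU PU us ms ds cov var ac.
have eU : eta (~` U) = 0 by rewrite probability_setC// etaU subee.
have pU : P (~` U) = 0 by rewrite probability_setC// PU subee.
pose c C := sup [set F z | z in C].
have Fc C z : C \in s -> C z -> (F z <= c C)%R.
  move=> Cs Cz; apply: ub_le_sup; last by exists z.
  by exists (F z + V)%R => _ [w Cw <-]; exact: var Cs Cw Cz.
have cF C z : C \in s -> C z -> (c C <= F z + V)%R.
  move=> Cs Cz; apply: ge_sup; first by exists (F z), z.
  by move=> _ [w Cw <-]; exact: var Cs Cw Cz.
have sfE (cc : set T -> R) z C : C \in s -> C z -> sfun s cc z = cc C.
  by move=> Cs Cz; exact: sfun_in us ds Cs Cz.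
pose p C := fine (eta C); pose q C := fine (P C).
have S1 : \int[eta]_z (F z)%:E <= (\sum_(C <- s) c C * p C)%:E.
  rewrite -(sfun_int eta s c ms).2; apply: (up_signed eta U mU eU).
    exact: sfun_meas.
  by move=> z Uz; have [C Cs Cz] := cov z Uz; rewrite (sfE c z C Cs Cz); exact: Fc.
have sp : (\sum_(C <- s) p C = 1)%R.
  have E1 : eta (\big[setU/set0]_(C <- s) C) = 1.
    apply/eqP; rewrite eq_le probability_le1/=; last first.
      by rewrite big_seq; apply: bigsetU_measurable.
    rewrite -etaU; apply: le_measure; rewrite ?inE//.
      by rewrite big_seq; apply: bigsetU_measurable.
    by move=> z Uz; rewrite -bigcup_seq; have [C Cs Cz] := cov z Uz; exists C.
  rewrite sum_measure// in E1.
  apply: EFin_inj; rewrite -sumEFin -E1; apply: eq_big_seq => C Cs.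
  by rewrite /p fineK// fin_num_measure//; exact: ms.
set I := \int[P]_z (expR (F z))%:E.
have I0 : 0 <= I by apply: integral_ge0 => z _; rewrite lee_fin expR_ge0.
have Iup : I <= (\sum_(C <- s) expR (c C) * q C)%:E.
  rewrite -(sfun_int P s (fun C => expR (c C)) ms).2; apply: (up_nn P U mU pU).
  - by move=> z; rewrite lee_fin expR_ge0.
  - by apply/measurable_EFinP; exact: sfun_meas.
  - move=> z; rewrite lee_fin /sfun big_seq sumr_ge0// => C _.
  - move=> z Uz; have [C Cs Cz] := cov z Uz.
    by rewrite (sfE _ z C Cs Cz) lee_fin ler_expR; exact: Fc.
have Ilow : (\sum_(C <- s) expR (c C - V) * q C)%:E <= I.
  rewrite -(sfun_int P s (fun C => expR (c C - V)) ms).2; apply: nn_mono.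
  - move=> z; rewrite lee_fin /sfun big_seq sumr_ge0// => C _.
  - move=> z; have [[C Cs Cz]|ncov] := pselect (exists2 C, C \in s & C z).
      rewrite (sfE _ z C Cs Cz) lee_fin ler_expR lerBlDr.
      exact: cF.
    by rewrite sfun_out ?lee_fin ?expR_ge0// => C Cs Cz; apply: ncov; exists C.
have Ifin : I \is a fin_num.
  by rewrite ge0_fin_numE// (le_lt_trans Iup)// ltry.
have p0 C : C \in s -> (0 <= p C)%R by move=> _; rewrite /p fine_ge0.
have q0 C : C \in s -> (0 <= q C)%R by move=> _; rewrite /q fine_ge0.
have qp C : C \in s -> q C = 0%R -> p C = 0%R.
  move=> Cs qC; have PC : P C = 0.
    have mC := ms C Cs; apply/eqP; rewrite -fine_eq0 ?fin_num_measure//; exact/eqP.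
  by rewrite /p (ac C Cs PC).
have [Z0 G] := @gibbs_ineq _ _ s p q c us p0 q0 qp sp.
set Z := (\sum_(C <- s) q C * expR (c C))%R in Z0 G.
have E1 : (\sum_(C <- s) expR (c C - V) * q C = Z * expR (- V))%R.
  rewrite /Z mulr_suml; apply: eq_bigr => C _.
  by rewrite expRD mulrC mulrA.
rewrite E1 -[I]fineK// lee_fin in Ilow.
have L : (ln Z - V <= ln (fine I))%R.
  have -> : (ln Z - V = ln (Z * expR (- V)))%R.
    by rewrite lnM ?posrE ?expR_gt0// expRK.
  by rewrite ler_ln ?posrE ?mulr_gt0 ?expR_gt0// (lt_le_trans _ Ilow)// mulr_gt0// expR_gt0.
apply: (le_trans (leeB S1 (lexx _))).
rewrite -EFinB lee_fin.
have -> : (\sum_(C <- s) c C * p C = \sum_(C <- s) p C * c C)%R.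
  by apply: eq_bigr => C _; rewrite mulrC.
apply: (le_trans G); lra.
Qed.

End core2.

Section SSlemmas.
Context {R : realType} {A : finType} {a0 : A}.
Local Notation SSa := (SS a0).

Lemma iter_shiftE k (x : SSa) i : iter k (@shift A a0) x i = x (i + k%:Z).
Proof.
elim: k i => [|k IH] i /=; first by rewrite addr0.
by rewrite /shift IH intS addrA.
Qed.

Lemma dX_small (x y : SSa) (M : nat) :
  (dX x y : R) < 2 `^ (- (M%:R)) -> forall i : int, (absz i <= M)%N -> y i = x i.
Proof.
move=> dxy i iM; apply/eqP; apply: contraLR dxy => /eqP yx.
rewrite -leNgt /dX.
set S := [set ((absz m)%:R : R)%:E | m in [set m : int | x m <> y m]].
have S0 : lbound S 0%E by move=> _ [j _ <-]; rewrite lee_fin.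
have Si : S ((absz i)%:R)%:E by exists i => //=; exact: nesym.
have := le_ereal_inf_tmp S0; have := ereal_inf_lbound Si.
case: (ereal_inf S) => [r||]//= ri r0.
apply: ler_powR; first by rewrite ler1n.
rewrite lerN2; rewrite lee_fin in ri; apply: (le_trans ri); rewrite ler_nat. exact: iM.
Qed.

Lemma win_open (P : int -> Prop) (M : nat) (a : SSa) :
  (forall i, P i -> (absz i <= M)%N) -> @dX_open R A a0 [set w | forall i, P i -> w i = a i].
Proof.
move=> PM w Hw; exists (2 `^ (- (M%:R)) : R); first by rewrite powR_gt0.
by move=> v /= dv i Pi; rewrite (dX_small _ _ _ dv i (PM i Pi)) Hw.
Qed.

Lemma open_meas (U : set (SSB R a0)) : @dX_open R A a0 U -> measurable U.
Proof. by move=> oU; exact: sub_sigma_algebra. Qed.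

Lemma cyl_eq m (a b : SSa) : (forall i, (absz i <= m)%N -> a i = b i) -> cyl m a = cyl m b.
Proof.
move=> ab; apply/seteqP; split => z /= H i im; first by rewrite H// ab.
by rewrite H// ab.
Qed.

Lemma cylk_open k m (a : SSa) :
  @dX_open R A a0 (iter k (@shift A a0) @^-1` cyl m a).
Proof.
move=> w Hw; exists (2 `^ (- ((m + k)%N%:R)) : R); first by rewrite powR_gt0.
move=> v dv i im /=; rewrite iter_shiftE (dX_small _ _ _ dv).
  by rewrite -iter_shiftE; exact: Hw.
lia.
Qed.

Lemma SFT_closed N (W : {set N.-tuple A}) :
  @dX_open R A a0 (~` [set x : SSa | forall i : int,
     [tuple x (i + (nat_of_ord j)%:Z)%R | j < N] \in W]).
Proof.
move=> x /= /existsNP [i Hi].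
exists (2 `^ (- ((absz i + N)%N%:R)) : R); first by rewrite powR_gt0.
move=> v dv Hv; apply: Hi.
have -> : [tuple x (i + (nat_of_ord j)%:Z)%R | j < N] =
          [tuple v (i + (nat_of_ord j)%:Z)%R | j < N].
  apply: eq_mktuple => j; rewrite (dX_small _ _ _ dv)//.
  have := ltn_ord j; lia.
exact: Hv.
Qed.

End SSlemmas.

From mathcomp Require Import finmap.

Theorem lemma7p2 (R : realType)
  (Th Y : pmetricType R) (A : finType) (a0 : A) (Xs : set (SS a0))
  (T : Y -> Y) (nu : probability (Borel Y) R)
  (f : Th -> SS a0 -> R) (mu : Th -> probability (SSB R a0) R)
  (l : Th -> SS a0 -> Y -> R) (lstar : Y -> R) (rho : R -> Y -> R)
  (pi0 : probability (Borel Th) R)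
  (P0 : probability (Borel Th * SSB R a0)%type R) :
  (* observed system *)
  metric_complete Y -> metric_separable Y ->
  measurable_fun setT (T : Borel Y -> Borel Y) ->
  T_invariant nu T -> T_ergodic nu T ->
  (* model system *)
  is_SFT Xs -> top_mixing R Xs ->
  compact [set: Th] ->
  regular_family Xs f -> (forall th, is_Gibbs Xs (f th) (mu th)) ->
  (* loss *)
  loss_continuous Xs l ->
  (forall th x y, Xs x -> `|l th x y| <= lstar y) ->
  nu.-integrable setT (fun y => (lstar y)%:E) ->
  (forall de : R, 0 < de ->
     measurable_fun setT (rho de : Borel Y -> R) /\ (forall y, 0 < rho de y)) ->
  (forall de : R, 0 < de -> forall th th' x x' y, Xs x -> Xs x' ->
     mdist th th' <= de -> dX x x' <= de ->
     `|l th x y - l th' x' y| <= rho de y) ->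
  (forall e : R, 0 < e -> exists2 r : R, 0 < r &
     forall de : R, 0 < de < r -> (\int[nu]_y (rho de y)%:E < e%:E)%E) ->
  (* prior *)
  full_support pi0 ->
  (forall E : set (Borel Th * SSB R a0)%type, measurable E ->
     P0 E = (\int[pi0]_th (\int[mu th]_x (\1_E (th, x))%:E))%E) ->
  (* the lemma *)
  forall (de : R) (alpha : set (set Th)) (beta : set (set (SS a0))),
  0 < de ->
  finite_meas_partition (alpha : set (set (Borel Th))) ->
  (part_diam mdist alpha < de%:E)%E ->
  central_partition Xs beta ->
  (part_diam dX beta < de%:E)%E ->
  forall (eta : probability (Borel Th * SSB R a0)%type R),
  eta (setT `*` Xs) = 1%E ->
  forall (y : Y) (n : nat), (1 <= n)%N ->
  (\int[eta]_z (gn l T n z.1 z.2 y)%:E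
     - KL eta P0 (prod_part alpha (join_iter beta n)) <=
   (ln (fine (\int[P0]_z (expR (gn l T n z.1 z.2 y))%:E))
     + \sum_(k < n) rho de (iter k T y))%:E)%E.
Proof.
move=> Ycomp Ysep mT Tinv Terg SFT mix cptTh reg Gibbs lcont lbnd lint rhoM lrho
  rhoint fsupp P0E de alpha beta de0 [alfin almeas aldisj alcov] aldiam
  [m betaE] bediam eta etaU y n n1.
have [N [W XsE]] := SFT.
pose sh := @shift A a0.
have XsS x : Xs (sh x) <-> Xs x.
  rewrite XsE /=; split => H i.
    have := H (i - 1); congr (_ \in W); apply: eq_mktuple => j.
    by rewrite /sh /shift; congr x; rewrite addrAC subrK.
  have := H (i + 1); congr (_ \in W); apply: eq_mktuple => j.
  by rewrite /sh /shift; congr x; rewrite addrAC.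
have XsI k x : Xs x -> Xs (iter k sh x).
  by elim: k => [//|k IH] /= /IH; rewrite XsS.
have mXs : measurable (Xs : set (SSB R a0)).
  rewrite -[Xs]setCK; apply: measurableC; apply: open_meas.
  rewrite XsE; exact: SFT_closed.
have XsIff k x : Xs (iter k sh x) <-> Xs x.
  elim: k x => [//|k IH] x; rewrite iterS; split.
    by move=> H; apply/(IH x); apply/XsS.
  by move=> H; apply/XsS; apply/(IH x).
have b1 B : beta B -> B `<=` Xs by rewrite betaE => -[x _ <-] z [].
have b2 B z : beta B -> B z -> B = Xs `&` cyl m z.
  rewrite betaE => -[x Xx <-] [Xz cz]; congr (_ `&` _).
  by apply: cyl_eq => i im; rewrite (cz i im).
have b3 B : beta B -> measurable (B : set (SSB R a0)).
  rewrite betaE => -[x _ <-]; apply: measurableI => //.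
  exact: (open_meas _ (@cylk_open R A a0 0 m x)).
have b4 B z z' : beta B -> B z -> B z' -> (dX z z' : R) <= de.
  move=> bB Bz Bz'; rewrite -lee_fin; apply: ltW; apply: le_lt_trans bediam.
  apply: (@le_trans _ _ (diam dX B)).
    by apply: ereal_sup_ubound; exists z => //; exists z'.
  by apply: ereal_sup_ubound; exists B.
pose J := join_iter beta n.
have j1 B : J B -> B `<=` Xs.
  move=> [_ [Bk [Hb ->]]] z Hz; exact: (b1 _ (Hb 0%N n1) _ (Hz 0%N n1)).
have j2 B : J B -> measurable (B : set (SSB R a0)).
  move=> [_ [Bk [Hb ->]]]; apply: bigcap_measurableType => k kn.
  have := Hb k kn; rewrite {1}betaE => -[x _ <-]; rewrite preimage_setI.
  apply: measurableI; last exact: (open_meas _ (@cylk_open R A a0 k m x)).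
  have -> : iter k (@shift A a0) @^-1` Xs = Xs.
    by apply/seteqP; split => z /=; rewrite XsIff.
  exact: mXs.
have j3 B B' : J B -> J B' -> B `&` B' !=set0 -> B = B'.
  move=> [_ [Bk [Hb ->]]] [_ [Bk' [Hb' ->]]] [v [Hv Hv']].
  have E k : (k < n)%N -> Bk k = Bk' k.
    by move=> kn; rewrite (b2 _ _ (Hb k kn) (Hv k kn)) (b2 _ _ (Hb' k kn) (Hv' k kn)).
  by apply/seteqP; split => w Hw k kn /=; [rewrite -E|rewrite E] => //; exact: Hw.
have j4 x : Xs x -> exists2 B, J B & B x.
  move=> Xx.
  exists (\bigcap_(k in [set k | (k < n)%N])
           (iter k sh @^-1` (Xs `&` cyl m (iter k sh x)))); last first.
    by move=> k kn; split; [exact: XsI|move=> i _].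
  split; first by exists x => k kn; split; [exact: XsI|move=> i _].
  exists (fun k => Xs `&` cyl m (iter k sh x)); split => // k kn.
  by rewrite betaE; exists (iter k sh x) => //; exact: XsI.
have j5 B x x' k : J B -> B x -> B x' -> (k < n)%N ->
    [/\ Xs (iter k sh x), Xs (iter k sh x') & (dX (iter k sh x) (iter k sh x') : R) <= de].
  move=> [_ [Bk [Hb BE]]]; rewrite BE => Hx Hx' kn.
  split; [exact: (b1 _ (Hb k kn) _ (Hx k kn))|exact: (b1 _ (Hb k kn) _ (Hx' k kn))|].
  exact: (b4 _ _ _ (Hb k kn) (Hx k kn) (Hx' k kn)).
have j6 : finite_set J.
  pose ext (t : {ffun 'I_(n + m + m).+1 -> A}) : SS a0 :=
    fun i => t (inord (absz (i + m%:Z))).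
  pose G (t : {ffun 'I_(n + m + m).+1 -> A}) :=
    \bigcap_(k in [set k | (k < n)%N])
       (iter k sh @^-1` (Xs `&` cyl m (iter k sh (ext t)))).
  apply: (@sub_finite_set _ _ (G @` setT)); last first.
    by apply: finite_image; exact: finite_finset.
  move=> B [[w Bw] [Bk [Hb BE]]].
  exists [ffun j : 'I_(n + m + m).+1 => w ((nat_of_ord j)%:Z - m%:Z)] => //.
  rewrite BE in Bw.
  have key k : (k < n)%N ->
      Bk k = Xs `&` cyl m (iter k sh (ext [ffun j : 'I_(n + m + m).+1 =>
                                         w ((nat_of_ord j)%:Z - m%:Z)])).
    move=> kn; rewrite (b2 _ _ (Hb k kn) (Bw k kn)); congr (_ `&` _).
    apply: cyl_eq => i im; rewrite !iter_shiftE /ext ffunE inordK; last by lia.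
    by congr w; lia.
  rewrite BE; apply/seteqP; split => v Hv k kn /=.
    by rewrite key//; exact: Hv.
  by have := Hv k kn; rewrite /preimage /= key.
have a3 A' th th' : alpha A' -> A' th -> A' th' -> mdist th th' <= de.
  move=> aA Ath Ath'; rewrite -lee_fin; apply: ltW; apply: le_lt_trans aldiam.
  apply: (@le_trans _ _ (diam mdist A')).
    by apply: ereal_sup_ubound; exists th => //; exists th'.
  by apply: ereal_sup_ubound; exists A'.
pose xi := prod_part alpha J.
have xfin : finite_set xi by exact: finite_image2.
have xiE (C : set (Borel Th * SSB R a0)%type) : (C \in fset_set xi) <-> xi C.
  by rewrite in_fset_set//; split => [/set_mem|/mem_set].
pose U := [set: Borel Th] `*` (Xs : set (SSB R a0)).
have mU : measurable U by apply: measurableX => //.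
have P0U : P0 U = 1%E.
  rewrite P0E//.
  have H th : (\int[mu th]_x (\1_U (th, x))%:E = 1)%E.
    transitivity (\int[mu th]_x (\1_Xs x)%:E)%E.
      apply: eq_integral => x _; rewrite !indicE; congr (_%:R%:E).
      by rewrite /U in_setX in_setT.
    by rewrite integral_indic// setIT; case: (Gibbs th).
  under eq_integral do rewrite H.
  have := integral_cst pi0 (@measurableT _ (Borel Th)) 1%E.
  by move=> ->; rewrite mul1e; apply: probability_setT.
rewrite /KL; case: asboolP => [ac|_]; last by rewrite addeNy leNye.
rewrite fsbig_finite//.
apply: (core eta P0 U (fset_set xi) (fun z => gn l T n z.1 z.2 y)
  (\sum_(k < n) rho de (iter k T y))) => //.
- exact: fset_uniq.
- move=> C /xiE [A' aA [B jB <-]].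
  by apply: measurableX; [exact: almeas|exact: j2].
- move=> C C' /xiE [A1 aA1 [B1 jB1 <-]] /xiE [A2 aA2 [B2 jB2 <-]].
  move=> [[th x] [[/= A1th B1x] [/= A2th B2x]]].
  have -> : A1 = A2.
    apply: contrapT => neq; have := aldisj _ _ aA1 aA2 neq.
    by move/seteqP => [+ _] => /(_ th) /=; apply.
  by rewrite (j3 B1 B2)//; exists x.
- move=> [th x] [_ /= Xx]; have : [set: Th] th by [].
  rewrite -alcov => -[A' aA Ath]; have [B jB Bx] := j4 x Xx.
  by exists (A' `*` B); [apply/xiE; exists A' => //; exists B|].
- move=> C z z' /xiE [A' aA [B jB <-]] [/= Az Bz] [/= Az' Bz'].
  rewrite /gn.
  have H : (\sum_(k < n) l z'.1 (iter k (@shift A a0) z'.2) (iter k T y) <=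
    \sum_(k < n) (l z.1 (iter k (@shift A a0) z.2) (iter k T y) + rho de (iter k T y)))%R.
    apply: ler_sum => k _.
    have [X1 X2 dd] := j5 B z.2 z'.2 k jB Bz Bz' (ltn_ord k).
    have := lrho de de0 z.1 z'.1 _ _ (iter k T y) X1 X2 (a3 A' _ _ aA Az Az') dd.
    have := ler_norm (l z'.1 (iter k (@shift A a0) z'.2) (iter k T y) -
                      l z.1 (iter k (@shift A a0) z.2) (iter k T y)).
    rewrite distrC; lra.
  rewrite big_split /= in H; lra.
- move=> C /xiE xC; apply: ac; exact: xC.
Qed.
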